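(* A topical function $f: \mathbb{R}^n \to \mathbb{R}^n$ is indecomposable if and only if the aggregated graph $\mathcal{G}^\infty(f)$ is strongly connected.
   Context: $f: \mathbb{R}^n \to \mathbb{R}^n$ is topical if $f(x+h) = f(x) + h$ for all $h \in \mathbb{R}$, $x \in \mathbb{R}^n$ (adding a scalar to every coordinate) and $x \le y$ componentwise implies $f(x) \le f(y)$. For $J \subseteq \{1,\dots,n\}$, $e_J$ is its characteristic vector. $f$ is decomposable if there is a partition $\{1,\dots,n\} = I \cup J$ into disjoint nonempty sets with $\lim_{u\to\infty} f_i(u e_J) < \infty$ for all $i \in I$; indecomposable otherwise. Aggregated graphs: $\mathcal{G}^1(f) = \mathcal{G}(f)$ is the directed graph on $\{1,\dots,n\}$ with an edge $i\to j$ iff $\lim_{u\to\infty} f_i(u e_{\{j\}}) = \infty$; each vertex $i$ is associated with the set $\sigma(i) = \{i\}$. For $k \ge 2$, the vertices of $\mathcal{G}^k(f)$ are the strongly connected components of $\mathcal{G}^{k-1}(f)$ (equivalence classes under: $X$ communicates with $Y$ iff $X = Y$ or there are directed paths both ways), a component $X$ being associated with $\sigma(X) = \bigcup_{Y \in X} \sigma(Y) \subseteq \{1,\dots,n\}$; there is an edge from $I$ to $J$ in $\mathcal{G}^k(f)$ iff there exists $i \in \sigma(I)$ with $\lim_{u\to\infty} f_i(u e_{\sigma(J)}) = \infty$. There is a least $N \le n$ such that $\mathcal{G}^k(f)$ is isomorphic to $\mathcal{G}^N(f)$ for all $k \ge N$, and $\mathcal{G}^\infty(f) := \mathcal{G}^N(f)$.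 *)

(* Defs.v *)
From HB Require Import structures.
From mathcomp Require Import all_boot all_order all_algebra.
From mathcomp Require Import all_classical all_reals all_analysis.
From Stdlib Require Import Relation_Operators.
Set Implicit Arguments. Unset Strict Implicit. Unset Printing Implicit Defensive.
Import Order.TTheory GRing.Theory Num.Theory.
Import numFieldNormedType.Exports.
Local Open Scope ring_scope.

Section Topical.
Variables (R : realType) (n : nat).

Definition vec := 'I_n -> R.

Definition charvec (J : {set 'I_n}) : vec := fun j => if j \in J then 1 else 0.

Definition scal_char (u : R) (J : {set 'I_n}) : vec := fun j => u * charvec J j.

Definition topical (f : vec -> vec) : Prop :=
  (forall (x : vec) (h : R), f (fun j => x j + h) = (fun i => f x i + h)) /\
  (forall x y : vec, (forall j, x j <= y j) -> forall i, f x i <= f y i).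

Definition lim_infty (f : vec -> vec) (i : 'I_n) (J : {set 'I_n}) : Prop :=
  ((f (scal_char u J) i) @[u --> +oo%R] --> +oo%R)%classic.

Definition lim_finite (f : vec -> vec) (i : 'I_n) (J : {set 'I_n}) : Prop :=
  exists l : R, ((f (scal_char u J) i) @[u --> +oo%R] --> l)%classic.

Definition decomposable (f : vec -> vec) : Prop :=
  exists I J : {set 'I_n},
    [/\ I :&: J = finset.set0, I :|: J = finset.setT, I != finset.set0, J != finset.set0 &
        forall i, i \in I -> lim_finite f i J].

Definition indecomposable (f : vec -> vec) : Prop := ~ decomposable f.

(* A vertex X of G^k is represented by its associated set
   sigma(X) (a subset of {1..n}); the vertex set of G^k is thus a set of
   subsets of 'I_n.  Edge from S to T: exists i in S with
   lim_{u->oo} f_i(u e_T) = oo.  (For k = 1 this is the edge relation of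
   G(f) on singletons.) *)
Definition edge (f : vec -> vec) (S T : {set 'I_n}) : Prop :=
  exists i, i \in S /\ lim_infty f i T.

Definition gedge (f : vec -> vec) (P : {set {set 'I_n}}) (S T : {set 'I_n}) : Prop :=
  [/\ S \in P, T \in P & edge f S T].

Definition reach (f : vec -> vec) (P : {set {set 'I_n}}) : {set 'I_n} -> {set 'I_n} -> Prop :=
  @clos_refl_trans _ (gedge f P).

Definition strongly_connected (f : vec -> vec) (P : {set {set 'I_n}}) : Prop :=
  forall S T, S \in P -> T \in P -> reach f P S T.

Definition communicates (f : vec -> vec) (P : {set {set 'I_n}}) (S T : {set 'I_n}) : Prop :=
  S = T \/ (reach f P S T /\ reach f P T S).

(* vertices of the next graph: for each strongly connected component, the union
   of the sets associated to its members *)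
Definition aggregate (f : vec -> vec) (P : {set {set 'I_n}}) : {set {set 'I_n}} :=
  [set \bigcup_(T in P | `[< communicates f P S T >]) T | S in P].

Definition singletons : {set {set 'I_n}} := [set [set i] | i : 'I_n].

(* part f k = vertex set of G^{k+1}(f) *)
Fixpoint part (f : vec -> vec) (k : nat) : {set {set 'I_n}} :=
  match k with
  | 0 => singletons
  | k'.+1 => aggregate f (part f k')
  end.

Definition Gvert (f : vec -> vec) (k : nat) : {set {set 'I_n}} := part f k.-1.

Definition graph_iso (f : vec -> vec) (P1 P2 : {set {set 'I_n}}) : Prop :=
  exists phi : {set 'I_n} -> {set 'I_n},
    [/\ {in P1 &, injective phi}, phi @: P1 = P2 &
        forall S T, S \in P1 -> T \in P1 -> (edge f S T <-> edge f (phi S) (phi T))].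

Definition stabilizes_at (f : vec -> vec) (N : nat) : Prop :=
  (1 <= N)%N /\ forall k, (N <= k)%N -> graph_iso f (Gvert f k) (Gvert f N).

Definition least_stab (f : vec -> vec) (N : nat) : Prop :=
  stabilizes_at f N /\ forall M, stabilizes_at f M -> (N <= M)%N.

(* G^oo(f) := G^N(f) for the least such N is strongly connected *)
Definition Ginf_strongly_connected (f : vec -> vec) : Prop :=
  forall N, least_stab f N -> strongly_connected f (Gvert f N).

End Topical.

(* Main.v *)
Require Import Defs.
From mathcomp Require Import all_boot all_order all_algebra.
From mathcomp Require Import all_classical all_reals all_analysis.
From Stdlib Require Import Relation_Operators Operators_Properties.
From mathcomp Require Import lra.
From Stdlib Require Classical_Prop.
Set Implicit Arguments. Unset Strict Implicit. Unset Printing Implicit Defensive.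
Import Order.TTheory GRing.Theory Num.Theory.
Import numFieldNormedType.Exports.
Local Open Scope ring_scope.

Section Ana.
Variables (R : realType) (n : nat) (f : vec R n -> vec R n).
Hypothesis mono : forall x y : vec R n, (forall j, x j <= y j) -> forall i, f x i <= f y i.

Lemma charvec_ge0 (J : {set 'I_n}) j : 0 <= charvec R J j.
Proof. by rewrite /charvec; case: ifP. Qed.

Lemma g_nd i J : nondecreasing_fun (fun u => f (scal_char u J) i).
Proof.
move=> u v uv; apply: mono => j; rewrite /scal_char.
by rewrite ler_wpM2r // charvec_ge0.
Qed.

Lemma dichot i J : ~ lim_infty f i J -> lim_finite f i J.
Proof.
move=> ninf.
have [ub|nub] := pselect (has_ubound (range (fun u => f (scal_char u J) i))).
  by exists (sup (range (fun u => f (scal_char u J) i))); apply: nondecreasing_cvgr => //; exact: g_nd.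
exfalso; apply: ninf; apply/cvgryPgt => A.
have [u Au] : exists u, A < f (scal_char u J) i.
  apply/not_existsP => H; apply: nub; exists A => _ [u _ <-].
  by have := H u; rewrite real_ltNge ?num_real// => /negP; rewrite negbK.
near=> v; apply: (lt_le_trans Au); apply: g_nd.
by near: v; apply: nbhs_pinfty_ge; rewrite num_real.
Unshelve. all: by end_near. Qed.

Lemma fin_sub i (T J : {set 'I_n}) : T \subset J -> lim_finite f i J -> ~ lim_infty f i T.
Proof.
move=> TJ [l hl] hinf.
have hJ : ((f (scal_char u J) i) @[u --> +oo] --> +oo)%classic.
  apply/cvgryPge => A.
  near=> u.
  apply: (@le_trans _ _ (f (scal_char u T) i)).
    by near: u; apply: cvgry_ge.
  apply: mono => j; rewrite /scal_char /charvec.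
  have u0 : 0 <= u by near: u; apply: nbhs_pinfty_ge; rewrite num_real.
  case: ifPn => jT; first by rewrite (fintype.subsetP TJ _ jT).
  by case: ifP => _; rewrite ?mulr1 ?mulr0.
have /cvgrPdist_lt /(_ 1 ltr01) := hl.
move/cvgry_gt : hJ => /(_ (l + 1)) => h1 h2.
have [u [hu1 hu2]] : exists u, l + 1 < f (scal_char u J) i /\ `|l - f (scal_char u J) i| < 1.
  have := filter_ex (filterI h1 h2) => -[u [? ?]]; by exists u.
move: hu2; rewrite ltr_norml => /andP[h _].
set g := f _ i in hu1 h; lra.
Unshelve. all: by end_near. Qed.
End Ana.

Section Comb.
Variables (R : realType) (n : nat) (f : vec R n -> vec R n).
Implicit Types (P : {set {set 'I_n}}) (S T X Y : {set 'I_n}).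

Definition U P S : {set 'I_n} := \bigcup_(T in P | `[< communicates f P S T >]) T.

Lemma aggE P : aggregate f P = [set U P S | S in P].
Proof. by []. Qed.

Lemma reach_refl P S : reach f P S S.
Proof. exact: rt_refl. Qed.

Lemma reach_trans P S T X : reach f P S T -> reach f P T X -> reach f P S X.
Proof. exact: rt_trans. Qed.

Lemma comm_refl P S : communicates f P S S.
Proof. by left. Qed.

Lemma comm_sym P S T : communicates f P S T -> communicates f P T S.
Proof. by case=> [->|[a b]]; [left|right]. Qed.

Lemma comm_trans P S T X : communicates f P S T -> communicates f P T X ->
  communicates f P S X.
Proof.
case=> [->//|[a b]]; case=> [<-|[c d]]; first by right.
by right; split; apply: reach_trans; eauto.
Qed.

Lemma U_eq P S S' : communicates f P S S' -> U P S = U P S'.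
Proof.
move=> c; apply: eq_bigl => T; apply/idP/idP => /andP[TP /asboolP h];
  rewrite TP; apply/asboolP.
  exact: comm_trans (comm_sym c) h.
exact: comm_trans c h.
Qed.

Lemma sub_U P S : S \in P -> S \subset U P S.
Proof. by move=> SP; apply: (finset.bigcup_sup S); rewrite SP /=; apply/asboolP; left. Qed.

Lemma mem_U P S i : i \in U P S -> exists2 T, T \in P & communicates f P S T /\ i \in T.
Proof. by move=> /finset.bigcupP[T /andP[TP /asboolP c] iT]; exists T. Qed.

Lemma agg_card P : (#|aggregate f P| < #|P|)%N \/ aggregate f P = P.
Proof.
rewrite aggE; case: (boolP (#|[set U P S | S in P]| == #|P|)) => [/imset_injP inj|ne].
  right; rewrite -[in RHS](imset_id P); apply: eq_in_imset => S SP.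
  apply/eqP; rewrite finset.eqEsubset sub_U // andbT; apply/fintype.subsetP => i /mem_U[T TP [c iT]].
  by rewrite (inj S T SP TP (U_eq c)).
by left; rewrite ltn_neqAle ne leq_imset_card.
Qed.

Lemma stab_ex : exists K, aggregate f (part f K) = part f K.
Proof.
have H k : (exists K, aggregate f (part f K) = part f K) \/ (#|part f k| + k <= #|part f 0|)%N.
  elim: k => [|k [ex|IH]]; [by right; rewrite addn0 | by left | ].
  case: (agg_card (part f k)) => [lt|eq]; last by left; exists k.
  by right; rewrite /= addnS; apply: leq_trans IH; rewrite ltn_add2r.
case: (H #|part f 0|.+1) => // h; exfalso; move: h.
by rewrite addnS ltnNge leq_addl.
Qed.

Lemma stab_const K : aggregate f (part f K) = part f K -> forall k, (K <= k)%N -> part f k = part f K.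
Proof.
move=> fx; elim=> [|k IH]; first by rewrite leqn0 => /eqP ->.
rewrite leq_eqVlt => /orP[/eqP <-//|]; rewrite ltnS => /IH /= ->; exact: fx.
Qed.

Definition ispart P := [/\ forall S, S \in P -> S != finset.set0,
  forall i, exists2 S, S \in P & i \in S &
  forall S T i, S \in P -> T \in P -> i \in S -> i \in T -> S = T].

Lemma ispart_single : ispart (Defs.singletons n).
Proof.
split.
- by move=> S /finset.imsetP[i _ ->]; apply/finset.set0Pn; exists i; rewrite set11.
- by move=> i; exists [set i]; [apply: finset.imset_f | rewrite set11].
- by move=> S T i /finset.imsetP[a _ ->] /finset.imsetP[b _ ->]; rewrite !inE => /eqP-> /eqP->.
Qed.

Lemma ispart_agg P : ispart P -> ispart (aggregate f P).
Proof.
case=> ne cov dis; rewrite aggE; split.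
- move=> _ /finset.imsetP[S SP ->]; have /finset.set0Pn[i iS] := ne S SP.
  by apply/finset.set0Pn; exists i; apply: (fintype.subsetP (sub_U SP)).
- move=> i; have [S SP iS] := cov i; exists (U P S); first exact: finset.imset_f.
  exact: (fintype.subsetP (sub_U SP)).
- move=> _ _ i /finset.imsetP[S SP ->] /finset.imsetP[S' S'P ->] /mem_U[T TP [c iT]] /mem_U[T' T'P [c' iT']].
  have ETT := dis _ _ _ TP T'P iT iT'; subst T'.
  by rewrite (U_eq c) -(U_eq c').
Qed.

Lemma ispart_part k : ispart (part f k).
Proof. elim: k => [|k IH]; [exact: ispart_single | exact: ispart_agg]. Qed.

Lemma fixed_comm P S T : ispart P -> aggregate f P = P -> S \in P -> T \in P ->
  communicates f P S T -> S = T.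
Proof.
case=> ne cov dis fx SP TP c.
have US : forall X, X \in P -> U P X = X.
  move=> X XP; have UP : U P X \in P by rewrite -{2}fx aggE; apply: finset.imset_f.
  have /finset.set0Pn[i iX] := ne X XP.
  by apply: (dis _ _ i UP XP) => //; apply: (fintype.subsetP (sub_U XP)).
have /finset.set0Pn[j jT] := ne T TP.
apply: (dis _ _ j SP TP) => //.
by rewrite -(US S SP) (U_eq c) (US T TP).
Qed.

End Comb.

Section Main.
Variables (R : realType) (n : nat) (f : vec R n -> vec R n).
Hypothesis mono : forall x y : vec R n, (forall j, x j <= y j) -> forall i, f x i <= f y i.
Implicit Types (P : {set {set 'I_n}}) (S T X Y : {set 'I_n}).

Lemma reach_map (phi : {set 'I_n} -> {set 'I_n}) P1 P2 :
  phi @: P1 = P2 ->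
  (forall S T, S \in P1 -> T \in P1 -> (edge f S T <-> edge f (phi S) (phi T))) ->
  forall S T, reach f P1 S T -> reach f P2 (phi S) (phi T).
Proof.
move=> im ed S T; elim => [X Y [XP YP e]|X|X Y Z _ IH1 _ IH2].
- apply: rt_step; split; rewrite -?im; try exact: finset.imset_f.
  by apply/(ed X Y XP YP).
- exact: rt_refl.
- exact: rt_trans IH1 IH2.
Qed.

Lemma sc_transfer P1 P2 : graph_iso f P1 P2 -> strongly_connected f P1 -> strongly_connected f P2.
Proof.
move=> [phi [_ im ed]] sc X Y XP YP.
have XP' := XP; have YP' := YP; rewrite -im in XP' YP'.
case/finset.imsetP: XP' => S SP ->; case/finset.imsetP: YP' => T TP ->.
by apply: (reach_map im ed); apply: sc.
Qed.

Lemma stab_K K : aggregate f (part f K) = part f K -> stabilizes_at f K.+1.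
Proof.
move=> fx; split => // k hk; rewrite /Gvert /= (stab_const fx); last first.
  by rewrite -ltnS (leq_trans hk) // leqSpred.
exists id; split; [by [] | exact: finset.imset_id | by move=> *; split].
Qed.

Lemma least_ex : exists N, least_stab f N.
Proof.
have [K fx] := stab_ex f.
have ex : exists M, (fun M => `[< stabilizes_at f M >]) M.
  by exists K.+1; apply/asboolP; exact: stab_K.
case: (ex_minnP ex) => N /asboolP st mn; exists N; split => // M /asboolP sM.
exact: mn.
Qed.

Lemma fixed_sc P : ispart P -> aggregate f P = P -> indecomposable f -> strongly_connected f P.
Proof.
move=> pP fx indec S0 T0 S0P T0P; apply: Classical_Prop.NNPP => nr; apply: indec.
have [ne cov dis] := pP.
pose anc T := [set X in P | `[< reach f P X T >]].
have [T TP Tmin] := @arg_minnP _ T0 (fun X => X \in P) (fun X => #|anc X|) T0P.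
have src : forall S, S \in P -> S != T -> ~ edge f S T.
  move=> S SP neq e; have g : gedge f P S T by split.
  have sub : anc S \proper anc T.
    apply/properP; split.
      apply/fintype.subsetP => X; rewrite !finset.inE => /andP[XP /asboolP r].
      by rewrite XP; apply/asboolP; apply: reach_trans r _; exact: rt_step g.
    exists T; first by rewrite finset.inE TP; apply/asboolP; exact: reach_refl.
    rewrite /anc finset.inE TP /=; apply/negP => /asboolP r.
    move/eqP: neq; apply; apply: (fixed_comm pP fx SP TP); right; split => //.
    exact: rt_step g.
  have := proper_card sub; have := Tmin S SP; rewrite leqNgt => /negP; exact.
have xT : forall X, X \in P -> X != T -> exists2 x, x \in X & x \notin T.
  move=> X XP XT; have /finset.set0Pn[x xX] := ne X XP; exists x => //.
  apply/negP => xT; move/eqP: XT; apply; exact: dis _ _ x XP TP xX xT.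
exists (~: T), T; split.
- by rewrite finset.setIC finset.setICr.
- by rewrite finset.setUC finset.setUCr.
- have [X XP XT] : exists2 X, X \in P & X != T.
    case: (eqVneq S0 T) => [eS|nS]; last by exists S0.
    exists T0 => //; apply/eqP => eT; apply: nr; rewrite eS eT; exact: reach_refl.
  have [x _ xnT] := xT X XP XT; apply/finset.set0Pn; exists x; by rewrite finset.in_setC.
- exact: ne.
- move=> i; rewrite finset.in_setC => iT.
  have [S SP iS] := cov i.
  have neq : S != T by apply/eqP => eST; move: iT; rewrite -eST iS.
  apply: dichot => // li; apply: (src S SP neq); exists i; split => //.
Qed.

Section Back.
Variables (I J : {set 'I_n}).
Hypothesis IJ : I :&: J = finset.set0.
Hypothesis UIJ : I :|: J = finset.setT.
Hypothesis lim : forall i, i \in I -> lim_finite f i J.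

Lemma IJdis i : i \in I -> i \in J -> False.
Proof. by move=> a b; have := (finset.setP _ _).2 IJ i; rewrite finset.inE a b finset.in_set0. Qed.

Lemma reach_I P : (forall S, S \in P -> S \subset I \/ S \subset J) ->
  forall X Y, reach f P X Y -> X \subset I -> Y \subset I.
Proof.
move=> inv X Y; elim => [A B [AP BP [i [iA li]]]|A|A B C _ IH1 _ IH2] //; last first.
  by move=> /IH1 /IH2.
move=> AI; case: (inv B BP) => // BJ; exfalso.
have hl := lim (fintype.subsetP AI _ iA).

exact: (fin_sub mono BJ hl li).
Qed.

Lemma inv_part k S : S \in part f k -> S \subset I \/ S \subset J.
Proof.
elim: k S => [|k IH] S /=.
  move=> /finset.imsetP[i _ ->]; rewrite !finset.sub1set.
  have : i \in I :|: J by rewrite UIJ finset.inE.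
  by rewrite finset.inE => /orP[]; [left|right].
set P := part f k.
rewrite aggE => /finset.imsetP[S' S'P ->].
have key : forall T, T \in P -> communicates f P S' T -> (T \subset I) = (S' \subset I).
  move=> T TP [->//|[r1 r2]]; apply/idP/idP.
    by apply: reach_I r2.
  by apply: reach_I r1.
case: (boolP (S' \subset I)) => SI.
  left; apply/fintype.subsetP => x /mem_U[T TP [c xT]].
  by apply: (fintype.subsetP _ _ xT); rewrite (key T TP c).
right; apply/fintype.subsetP => x /mem_U[T TP [c xT]].
case: (IH T TP) => TI; last exact: (fintype.subsetP TI).
by move: SI; rewrite -(key T TP c) TI.
Qed.

End Back.

End Main.

Unset Implicit Arguments.
Local Close Scope ring_scope.

Theorem theorem6 (R : realType) (n : nat) (f : vec R n -> vec R n) :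
  topical f -> (indecomposable f <-> Ginf_strongly_connected f).
Proof.
move=> [_ mono]; split.
- move=> indec N [[N1 stN] _].
  have [K fx] := stab_ex f.
  have iso := stN (maxn N K.+1) (leq_maxl _ _).
  have E : Gvert f (maxn N K.+1) = part f K.
    rewrite /Gvert (stab_const fx) //.
    by rewrite -ltnS (leq_trans (leq_maxr N K.+1)) // leqSpred.
  rewrite E in iso; apply: (sc_transfer iso).
  have fs := fixed_sc mono (ispart_part f K) fx indec; exact: fs.
- move=> gsc [I [J [IJ UIJ In Jn lim]]].
  have [N lsN] := least_ex f.
  have sc := gsc N lsN; rewrite /Gvert in sc.
  set P := part f N.-1 in sc.
  have [_ cov _] := ispart_part f N.-1.
  have inv := inv_part mono UIJ lim (k := N.-1).
  have /finset.set0Pn[i iI] := In.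
  have /finset.set0Pn[j jJ] := Jn.
  have [S SP iS] := cov i; have [T TP jT] := cov j.
  have SI : S \subset I.
    case: (inv S SP) => // SJ; exfalso; have iJ := fintype.subsetP SJ _ iS. refine (@IJdis n I J IJ i iI iJ).
  have TI := reach_I mono lim inv (sc S T SP TP) SI.
  have jI := fintype.subsetP TI _ jT. exact: (IJdis IJ jI jJ).
Qed.
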